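(* Let $\Gamma\curvearrowright X, I$ be a stratified dynamical ideal with permutation model $W[[X]]$. Then in $W[[X]]$, every set is either a countable union of finite sets or contains an injective image of $\omega$.
   Context: Work in ZFC. $V[[X]]$ is the well-founded model of ZFCA with set of atoms exactly $X$ in which every set of elements is represented by an element; a group action of $\Gamma$ on $X$ extends to $V[[X]]$ by $\gamma\cdot A=\{\gamma\cdot B:B\in A\}$. $\mathrm{stab}(A)=\{\gamma:\gamma\cdot A=A\}$, $\mathrm{pstab}(a)=\{\gamma:\gamma\cdot B=B\ \forall B\in a\}$. A dynamical ideal $\Gamma\curvearrowright X, I$: a group $\Gamma$ acting on $X$ and a $\Gamma$-invariant ideal $I$ on $X$ containing all singletons. Its permutation model $W[[X]]$ is the class of $A\in V[[X]]$ such that $A$ and every element of its transitive closure are symmetric, where $A$ is symmetric if $\mathrm{pstab}(b)\subseteq\mathrm{stab}(A)$ for some $b\in I$. The dynamical ideal is stratified if there are $\Gamma$-invariant ideals $I_n$ ($n\in\omega$) on $X$ such that (1) $I_0\subseteq I_1\subseteq\cdots$ and $I=\bigcup_n I_n$; (2) for every $n$ and all sets $a$ and $b_m$ ($m\in\omega$) in $I_n$ there are $\gamma_m\in\mathrm{pstab}(a)$ with $\bigcup_m\gamma_m\cdot b_m\in I_{n+1}$. *)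

(* Defs.v *)
(* Well-founded sets with atoms (Aczel-style model of ZFCA over
   a type of atoms X), group actions, dynamical ideals, permutation models. *)
From Stdlib Require Import Arith.

Set Implicit Arguments.

Record GroupAction (X : Type) := {
  Gam : Type;
  gmul : Gam -> Gam -> Gam;
  gone : Gam;
  ginv : Gam -> Gam;
  gmul_assoc : forall a b c, gmul a (gmul b c) = gmul (gmul a b) c;
  gmul_1l : forall a, gmul gone a = a;
  gmul_Vl : forall a, gmul (ginv a) a = gone;
  act : Gam -> X -> X;
  act_one : forall x, act gone x = x;
  act_mul : forall g h x, act (gmul g h) x = act g (act h x)
}.

Inductive VA (X : Type) : Type :=
| Atom : X -> VA X
| SetOf : forall I : Type, (I -> VA X) -> VA X.

Arguments Atom {X} _.
Arguments SetOf {X} I _.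

Section VAtheory.
Variable X : Type.

Fixpoint veq (a b : VA X) {struct a} : Prop :=
  match a, b with
  | Atom x, Atom y => x = y
  | SetOf I0 f, SetOf J0 g =>
      (forall i, exists j, veq (f i) (g j)) /\ (forall j, exists i, veq (f i) (g j))
  | _, _ => False
  end.

Definition vmem (z A : VA X) : Prop :=
  match A with
  | Atom _ => False
  | SetOf I0 f => exists i, veq z (f i)
  end.

Definition isSet (A : VA X) : Prop :=
  match A with Atom _ => False | SetOf _ _ => True end.

Definition vpair (a b : VA X) : VA X := SetOf bool (fun t => if t then a else b).
Definition vopair (a b : VA X) : VA X := vpair (vpair a a) (vpair a b).

Definition vsucc (A : VA X) : VA X :=
  match A with
  | Atom x => Atom x
  | SetOf I0 f => SetOf (option I0) (fun o => match o with Some i => f i | None => SetOf I0 f end)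
  end.

Fixpoint vnat (n : nat) : VA X :=
  match n with
  | 0 => SetOf Empty_set (fun e => match e with end)
  | S n => vsucc (vnat n)
  end.

Definition vomega : VA X := SetOf nat vnat.

Definition vgraph_fin (k : nat) (F : nat -> VA X) : VA X :=
  SetOf {i : nat | i < k} (fun i => vopair (vnat (proj1_sig i)) (F (proj1_sig i))).

Definition vgraph_omega (F : nat -> VA X) : VA X :=
  SetOf nat (fun n => vopair (vnat n) (F n)).

End VAtheory.

Arguments veq {X} _ _.
Arguments vmem {X} _ _.
Arguments isSet {X} _.
Arguments vnat {X} _.
Arguments vomega {X}.

Section Action.
Variable X : Type.
Variable GA : GroupAction X.

Fixpoint actV (g : Gam GA) (A : VA X) : VA X :=
  match A with
  | Atom x => Atom (act GA g x)
  | SetOf I0 f => SetOf I0 (fun i => actV g (f i))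
  end.

Definition stab (A : VA X) (g : Gam GA) : Prop := veq (actV g A) A.

Definition pstab (b : X -> Prop) (g : Gam GA) : Prop :=
  forall x, b x -> act GA g x = x.

Definition img (g : Gam GA) (b : X -> Prop) : X -> Prop :=
  fun x => exists y, b y /\ act GA g y = x.

Definition is_ideal (I : (X -> Prop) -> Prop) : Prop :=
  I (fun _ => False) /\
  (forall a b, I b -> (forall x, a x -> b x) -> I a) /\
  (forall a b, I a -> I b -> I (fun x => a x \/ b x)).

Definition invariant_ideal (I : (X -> Prop) -> Prop) : Prop :=
  is_ideal I /\ forall g b, I b -> I (img g b).

Definition dynamical_ideal (I : (X -> Prop) -> Prop) : Prop :=
  invariant_ideal I /\ forall x0, I (fun x => x = x0).

Definition stratified (I : (X -> Prop) -> Prop) : Prop :=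
  exists In : nat -> (X -> Prop) -> Prop,
    (forall n, invariant_ideal (In n)) /\
    (forall n b, In n b -> In (S n) b) /\
    (forall b, I b <-> exists n, In n b) /\
    (forall n (a : X -> Prop) (bs : nat -> X -> Prop),
        In n a -> (forall m, In n (bs m)) ->
        exists gs : nat -> Gam GA,
          (forall m, pstab a (gs m)) /\
          In (S n) (fun x => exists m, img (gs m) (bs m) x)).

Definition symmetric (I : (X -> Prop) -> Prop) (A : VA X) : Prop :=
  exists b, I b /\ forall g, pstab b g -> stab A g.

Fixpoint inW (I : (X -> Prop) -> Prop) (A : VA X) : Prop :=
  match A with
  | Atom x => symmetric I (Atom x)
  | SetOf J f => symmetric I (SetOf J f) /\ forall j, inW I (f j)
  end.

(* "B is finite" evaluated in W[[X]]: a bijection from some natural k onto B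
   that belongs to W[[X]] *)
Definition finite_in_W (I : (X -> Prop) -> Prop) (B : VA X) : Prop :=
  exists (k : nat) (h : nat -> VA X),
    inW I (vgraph_fin k h) /\
    (forall i j, i < k -> j < k -> veq (h i) (h j) -> i = j) /\
    veq B (SetOf {i : nat | i < k} (fun i => h (proj1_sig i))).

(* "A is a countable union of finite sets" evaluated in W[[X]]:
   a function F in W[[X]] with domain omega, all of whose values are finite
   in W[[X]], whose union is A *)
Definition ctbl_union_finite_in_W (I : (X -> Prop) -> Prop) (A : VA X) : Prop :=
  exists F : nat -> VA X,
    inW I (vgraph_omega F) /\
    (forall n, finite_in_W I (F n)) /\
    (forall z, vmem z A <-> exists n, vmem z (F n)).

(* "A contains an injective image of omega" evaluated in W[[X]]:
   an injection omega -> A belonging to W[[X]] *)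
Definition contains_omega_in_W (I : (X -> Prop) -> Prop) (A : VA X) : Prop :=
  exists G : nat -> VA X,
    inW I (vgraph_omega G) /\
    (forall n m, veq (G n) (G m) -> n = m) /\
    (forall n, vmem (G n) A).

End Action.

(* Main.v *)
Require Import Defs.
From Stdlib Require Import Classical ClassicalEpsilon List Lia Arith.

Lemma choice_fun {A B : Type} (R : A -> B -> Prop) :
  (forall a, exists b, R a b) -> exists f : A -> B, forall a, R a (f a).
Proof.
  intros H. exists (fun a => proj1_sig (constructive_indefinite_description _ (H a))).
  intro a. exact (proj2_sig (constructive_indefinite_description _ (H a))).
Qed.

Lemma veq_refl {X} (a : VA X) : veq a a.
Proof. induction a as [x| I0 f IH]; simpl; auto. split; intro i; exists i; apply IH. Qed.

Lemma veq_sym {X} (a b : VA X) : veq a b -> veq b a.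
Proof.
  revert b; induction a as [x|I0 f IH]; destruct b as [y|J0 g]; simpl; try tauto.
  - intros; subst; auto.
  - intros [H1 H2]; split.
    + intro j; destruct (H2 j) as [i Hi]; exists i; apply IH; auto.
    + intro i; destruct (H1 i) as [j Hj]; exists j; apply IH; auto.
Qed.

Lemma veq_trans {X} (a b c : VA X) : veq a b -> veq b c -> veq a c.
Proof.
  revert b c; induction a as [x|I0 f IH]; destruct b as [y|J0 g]; destruct c as [z|K0 h];
    simpl; try tauto.
  - congruence.
  - intros [H1 H2] [H3 H4]; split.
    + intro i; destruct (H1 i) as [j Hj]; destruct (H3 j) as [k Hk]; exists k; eauto.
    + intro k; destruct (H4 k) as [j Hj]; destruct (H2 j) as [i Hi]; exists i; eauto.
Qed.

Lemma actV_resp {X} (GA : GroupAction X) g (a b : VA X) :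
  veq a b -> veq (actV GA g a) (actV GA g b).
Proof.
  revert b; induction a as [x|I0 f IH]; destruct b as [y|J0 h]; simpl; try tauto.
  - intros ->; reflexivity.
  - intros [H1 H2]; split.
    + intro i; destruct (H1 i) as [j Hj]; exists j; auto.
    + intro j; destruct (H2 j) as [i Hi]; exists i; auto.
Qed.

Lemma actV_mul {X} (GA : GroupAction X) g h (a : VA X) :
  veq (actV GA (gmul GA g h) a) (actV GA g (actV GA h a)).
Proof.
  induction a as [x|I0 f IH]; simpl.
  - apply act_mul.
  - split; intro i; exists i; apply IH.
Qed.

Lemma actV_one {X} (GA : GroupAction X) (a : VA X) : veq (actV GA (gone GA) a) a.
Proof.
  induction a as [x|I0 f IH]; simpl.
  - apply act_one.
  - split; intro i; exists i; apply IH.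
Qed.

Lemma mul_Vr {X} (GA : GroupAction X) a : gmul GA a (ginv GA a) = gone GA.
Proof.
  set (b := ginv GA a).
  rewrite <- (gmul_1l GA (gmul GA a b)).
  rewrite <- (gmul_Vl GA b) at 1.
  rewrite <- gmul_assoc. rewrite (gmul_assoc GA b a b).
  unfold b at 2. rewrite gmul_Vl, gmul_1l. apply gmul_Vl.
Qed.

Lemma actV_inv_l {X} (GA : GroupAction X) g (a : VA X) :
  veq (actV GA (ginv GA g) (actV GA g a)) a.
Proof.
  eapply veq_trans; [apply veq_sym, actV_mul|]. rewrite gmul_Vl. apply actV_one.
Qed.

Lemma actV_inv_r {X} (GA : GroupAction X) g (a : VA X) :
  veq (actV GA g (actV GA (ginv GA g) a)) a.
Proof.
  eapply veq_trans; [apply veq_sym, actV_mul|]. rewrite mul_Vr. apply actV_one.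
Qed.

Lemma actV_inj {X} (GA : GroupAction X) g (a b : VA X) :
  veq (actV GA g a) (actV GA g b) -> veq a b.
Proof.
  intro H. apply (actV_resp GA (ginv GA g)) in H.
  eapply veq_trans; [apply veq_sym, actV_inv_l|]. eapply veq_trans; [exact H|]. apply actV_inv_l.
Qed.

Lemma act_inv_l {X} (GA : GroupAction X) g x : act GA (ginv GA g) (act GA g x) = x.
Proof. rewrite <- act_mul, gmul_Vl. apply act_one. Qed.

Lemma pstab_inv {X} (GA : GroupAction X) a g : pstab GA a g -> pstab GA a (ginv GA g).
Proof. intros H x Hx. rewrite <- (H x Hx) at 1. apply act_inv_l. Qed.

Lemma stab_resp {X} (GA : GroupAction X) y y' h :
  veq y y' -> stab GA y h -> stab GA y' h.
Proof.
  unfold stab; intros E S.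
  eapply veq_trans; [apply actV_resp, veq_sym, E|]. eapply veq_trans; [exact S| exact E].
Qed.

Lemma supp_transport {X} (GA : GroupAction X) e y g :
  (forall g', pstab GA e g' -> stab GA y g') ->
  forall h, pstab GA (img GA g e) h -> stab GA (actV GA g y) h.
Proof.
  intros Hs h Hh. unfold stab.
  set (g' := gmul GA (ginv GA g) (gmul GA h g)).
  assert (Hg' : pstab GA e g').
  { intros x Hx. unfold g'. rewrite !act_mul.
    rewrite (Hh (act GA g x)) by (exists x; auto). apply act_inv_l. }
  assert (E : gmul GA h g = gmul GA g g').
  { unfold g'. rewrite gmul_assoc, mul_Vr, gmul_1l. reflexivity. }
  eapply veq_trans; [apply veq_sym, actV_mul|]. rewrite E.
  eapply veq_trans; [apply actV_mul|]. apply actV_resp. apply Hs, Hg'.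
Qed.

Lemma stab_SetOf {X} (GA : GroupAction X) I0 (f : I0 -> VA X) g :
  (forall i, stab GA (f i) g) -> stab GA (SetOf I0 f) g.
Proof. intros H; unfold stab; simpl; split; intro i; exists i; apply H. Qed.

Lemma stab_mem {X} (GA : GroupAction X) I0 (f : I0 -> VA X) g :
  stab GA (SetOf I0 f) g -> forall i, exists j, veq (actV GA g (f i)) (f j).
Proof. unfold stab; simpl; intros [H _]; exact H. Qed.

Lemma stab_mem' {X} (GA : GroupAction X) I0 (f : I0 -> VA X) g :
  stab GA (SetOf I0 f) g -> forall j, exists i, veq (actV GA g (f i)) (f j).
Proof. unfold stab; simpl; intros [_ H]; exact H. Qed.

Fixpoint pure {X} (a : VA X) : Prop :=
  match a with Atom _ => False | SetOf _ f => forall i, pure (f i) end.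

Lemma stab_pure {X} (GA : GroupAction X) a g : pure a -> stab GA a g.
Proof.
  induction a as [x|I0 f IH]; simpl; [tauto|]. intro H. apply stab_SetOf. intro i; apply IH, H.
Qed.

Lemma pure_vnat {X} n : pure (@vnat X n).
Proof.
  induction n; simpl. - intros []. - destruct (@vnat X n) as [x|I0 f] eqn:E; simpl in *; [tauto|].
    intros [i|]; auto.
Qed.

Lemma stab_vpair {X} (GA : GroupAction X) a b g :
  stab GA a g -> stab GA b g -> stab GA (vpair a b) g.
Proof. intros; apply stab_SetOf; intros []; auto. Qed.

Lemma stab_vopair {X} (GA : GroupAction X) a b g :
  stab GA a g -> stab GA b g -> stab GA (vopair a b) g.
Proof. intros; apply stab_vpair; apply stab_vpair; auto. Qed.

Lemma ideal_union_fin {X} (J : (X -> Prop) -> Prop) (e : nat -> X -> Prop) N :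
  is_ideal J -> (forall i, i < N -> J (e i)) -> J (fun x => exists i, i < N /\ e i x).
Proof.
  intros [H0 [Hsub Hu]]. induction N; intro He.
  - eapply Hsub; [exact H0|]. intros x [i [Hi _]]; lia.
  - eapply Hsub; [apply (Hu _ _ (IHN (fun i Hi => He i ltac:(lia))) (He N ltac:(lia)))|].
    intros x [i [Hi Hx]]. destruct (Nat.eq_dec i N); [subst; right; auto|left; exists i; split; [lia|auto]].
Qed.

Lemma ideal_union_list {X} {T} (J : (X -> Prop) -> Prop) (e : T -> X -> Prop) (l : list T) :
  is_ideal J -> (forall y, In y l -> J (e y)) -> J (fun x => exists y, In y l /\ e y x).
Proof.
  intros [H0 [Hsub Hu]]. induction l as [|y l IH]; intro He.
  - eapply Hsub; [exact H0|]. intros x [y [[] _]].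
  - eapply Hsub; [apply (Hu _ _ (He y (or_introl eq_refl)) (IH (fun z Hz => He z (or_intror Hz))))|].
    intros x [z [[<-|Hz] Hx]]; [left; auto|right; exists z; auto].
Qed.

Lemma symmetric_vpair {X} (GA : GroupAction X) I a b :
  is_ideal I -> symmetric GA I a -> symmetric GA I b -> symmetric GA I (vpair a b).
Proof.
  intros [H0 [Hsub Hu]] [ea [Ha Sa]] [eb [Hb Sb]].
  exists (fun x => ea x \/ eb x); split; [apply Hu; auto|].
  intros g Hg; apply stab_vpair; [apply Sa|apply Sb]; intros x Hx; apply Hg; auto.
Qed.

Lemma inW_sym {X} (GA : GroupAction X) I a : inW GA I a -> symmetric GA I a.
Proof. destruct a; simpl; tauto. Qed.

Lemma inW_vpair {X} (GA : GroupAction X) I a b :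
  is_ideal I -> inW GA I a -> inW GA I b -> inW GA I (vpair a b).
Proof.
  intros Hi Ha Hb. simpl. split; [apply symmetric_vpair; auto; apply inW_sym; auto|].
  intros []; auto.
Qed.

Lemma inW_vopair {X} (GA : GroupAction X) I a b :
  is_ideal I -> inW GA I a -> inW GA I b -> inW GA I (vopair a b).
Proof. intros; unfold vopair; repeat apply inW_vpair; auto. Qed.

Lemma inW_pure {X} (GA : GroupAction X) I a :
  I (fun _ => False) -> pure a -> inW GA I a.
Proof.
  intro H0; induction a as [x|I0 f IH]; simpl; [tauto|]. intro Hp; split.
  - exists (fun _ => False); split; auto. intros g _; apply stab_pure; simpl; auto.
  - intro i; apply IH, Hp.
Qed.

Lemma pigeon L : forall N (s : nat -> nat), (forall i, i < N -> s i < L) ->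
  (forall i l, i < N -> l < N -> s i = s l -> i = l) -> N <= L.
Proof.
  induction L; intros N s Hs Hi.
  - destruct N; [lia|]. specialize (Hs 0 ltac:(lia)); lia.
  - destruct N as [|N]; [lia|].
    set (s' := fun i => if Nat.eq_dec (s i) L then s N else s i).
    enough (N <= L) by lia. apply (IHL N s').
    + intros i Hi'. unfold s'. destruct (Nat.eq_dec (s i) L).
      * assert (s N <> L) by (intro E; assert (i = N) by (apply Hi; lia); lia).
        specialize (Hs N ltac:(lia)); lia.
      * specialize (Hs i ltac:(lia)); lia.
    + intros i l Hi' Hl' E. unfold s' in E.
      destruct (Nat.eq_dec (s i) L), (Nat.eq_dec (s l) L).
      * apply Hi; lia.
      * assert (N = l) by (apply Hi; lia); lia.
      * assert (i = N) by (apply Hi; lia); lia.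
      * apply Hi; lia.
Qed.

Definition Dist {X} (l : list (VA X)) := forall i j, i < length l -> j < length l ->
  veq (nth i l (vnat 0)) (nth j l (vnat 0)) -> i = j.

Lemma dedup {X} (l : list (VA X)) : exists l', (forall y, In y l' -> In y l) /\
  (forall y, In y l -> exists y', In y' l' /\ veq y y') /\ Dist l'.
Proof.
  induction l as [|y t [t' [H1 [H2 H3]]]].
  - exists nil; repeat split; simpl; try tauto. intros i j Hi; simpl in Hi; lia.
  - destruct (classic (exists y', In y' t' /\ veq y y')) as [[y' [Hy' E]]|Hn].
    + exists t'; repeat split; auto.
      * intros z Hz; right; auto.
      * intros z [<-|Hz]; eauto.
    + exists (y :: t'); repeat split.
      * intros z [<-|Hz]; [left|right]; auto.
      * intros z [Ez|Hz]; [subst z; exists y; split; [left; auto|apply veq_refl]|].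
        destruct (H2 z Hz) as [y' [? ?]]; exists y'; split; [right|]; auto.
      * intros [|i] [|j] Hi Hj E; simpl in *; auto.
        -- exfalso; apply Hn; exists (nth j t' (vnat 0)); split; [apply nth_In; lia|auto].
        -- exfalso; apply Hn; exists (nth i t' (vnat 0)); split; [apply nth_In; lia|apply veq_sym; auto].
        -- f_equal; apply H3; auto; lia.
Qed.

Theorem mainTheorem19 (X : Type) (GA : GroupAction X) (I : (X -> Prop) -> Prop) :
  dynamical_ideal GA I ->
  stratified GA I ->
  forall A : VA X, inW GA I A -> isSet A ->
    ctbl_union_finite_in_W GA I A \/ contains_omega_in_W GA I A.
Proof.
  intros [[Hideal Hinvar] Hsing] [Ik [Hinv [Hmono [HI Hstr]]]] A HA HisSet.
  destruct A as [x|J f]; [contradiction|].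
  destruct HA as [[a [Ia Ha]] HfW].
  destruct (proj1 (HI a) Ia) as [n0 Ha0].
  assert (HI0 : I (fun _ => False)) by apply Hideal.
  assert (Hmono' : forall n p b, Ik n b -> Ik (n + p) b).
  { intros n p b H; induction p; [rewrite Nat.add_0_r; auto|rewrite Nat.add_succ_r; auto]. }
  set (R := fun k y => exists e, Ik k e /\ forall g, pstab GA e g -> stab GA y g).
  assert (Rtrans : forall k y g y', R k y -> veq (actV GA g y) y' -> R k y').
  { intros k y g y' [e [He Se]] E. exists (img GA g e). split; [apply (Hinv k); auto|].
    intros h Hh. eapply stab_resp; [exact E|]. apply supp_transport with (e := e); auto. }
  set (Cov := fun k l => (forall y, In y l -> exists j, y = f j /\ R k (f j)) /\
     (forall j, R k (f j) -> exists y, In y l /\ veq (f j) y)).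
  destruct (classic (forall k, exists l, Cov k l)) as [Hfin|Hinf].
  - left.
    assert (Hfin' : forall k, exists l, Cov k l /\ Dist l).
    { intro k. destruct (Hfin k) as [l [C1 C2]]. destruct (dedup l) as [l' [D1 [D2 D3]]].
      exists l'; repeat split; auto.
      intros j Hj. destruct (C2 j Hj) as [y [Hy E]]. destruct (D2 y Hy) as [y' [Hy' E']].
      exists y'; split; auto; eapply veq_trans; eauto. }
    destruct (choice_fun _ Hfin') as [Lf HLf].
    set (D := fun k => SetOf {j : J | R k (f j)} (fun p => f (proj1_sig p))).
    assert (HstabD : forall k g, pstab GA a g -> stab GA (D k) g).
    { intros k g Hg. unfold stab, D; simpl; split.
      + intros [j Hj]. destruct (stab_mem _ _ _ _ (Ha g Hg) j) as [j' E].
        exists (exist _ j' (Rtrans _ _ _ _ Hj E)). simpl. exact E.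
      + intros [j Hj]. destruct (stab_mem _ _ _ _ (Ha _ (pstab_inv _ _ _ Hg)) j) as [j' E].
        exists (exist _ j' (Rtrans _ _ _ _ Hj E)). simpl.
        eapply veq_trans; [apply actV_resp, veq_sym, E|]. apply actV_inv_r. }
    exists D. split; [|split].
    + simpl. split.
      * exists a; split; auto. intros g Hg. apply stab_SetOf; intro m.
        apply stab_vopair; [apply stab_pure, pure_vnat|apply HstabD; auto].
      * intro m. apply inW_vopair; auto; [apply inW_pure; auto; apply pure_vnat|].
        simpl. split; [exists a; split; auto; intros; apply HstabD; auto|intro p; apply HfW].
    + intro m. destruct (HLf m) as [[C1 C2] Hd]. set (l := Lf m) in *.
      set (h := fun i => nth i l (vnat 0)).
      assert (Hh : forall i, i < length l -> exists j, h i = f j /\ R m (f j)).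
      { intros i Hi. apply C1. apply nth_In; auto. }
      assert (Hes : forall i, exists e, i < length l -> I e /\ forall g, pstab GA e g -> stab GA (h i) g).
      { intro i. destruct (classic (i < length l)) as [Hi|Hi].
        - destruct (Hh i Hi) as [j [Ej _]]. destruct (inW_sym _ _ _ (HfW j)) as [e He].
          exists e; intros _; rewrite Ej; exact He.
        - exists (fun _ => False); intro; lia. }
      destruct (choice_fun _ Hes) as [es Hes'].
      exists (length l), h. split; [|split].
      * simpl. split.
        -- exists (fun x => exists i, i < length l /\ es i x). split.
           ++ apply ideal_union_fin; auto. intros i Hi; apply (Hes' i Hi).
           ++ intros g Hg. apply stab_SetOf. intros [i Hi]; simpl.
              apply stab_vopair; [apply stab_pure, pure_vnat|].
              apply (Hes' i Hi). intros x Hx; apply Hg; exists i; auto.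
        -- intros [i Hi]; simpl. apply inW_vopair; auto; [apply inW_pure; auto; apply pure_vnat|].
           destruct (Hh i Hi) as [j [-> _]]. apply HfW.
      * exact Hd.
      * simpl. split.
        -- intros [j Hj]. destruct (C2 j Hj) as [y [Hy E]].
           destruct (In_nth l y (vnat 0) Hy) as [i [Hi Ei]].
           exists (exist _ i Hi). simpl. unfold h. rewrite Ei. exact E.
        -- intros [i Hi]. destruct (Hh i Hi) as [j [Ej HR]].
           exists (exist _ j HR). simpl. rewrite Ej. apply veq_refl.
    + intro z. simpl. split.
      * intros [j E]. destruct (inW_sym _ _ _ (HfW j)) as [e [Ie Se]].
        destruct (proj1 (HI e) Ie) as [k Hk]. exists k.
        exists (exist _ j (ex_intro _ e (conj Hk Se) : R k (f j))). simpl; auto.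
      * intros [k [[j Hj] E]]. exists j; auto.
  - right. apply not_all_ex_not in Hinf as [k Hk].
    set (Good := fun l => forall y, In y l -> exists j, y = f j /\ R k (f j)).
    assert (StepA : forall N, exists l, length l = N /\ Good l /\ Dist l).
    { induction N as [|N [l [Hl [Hg Hd]]]].
      - exists nil; split; [reflexivity|split; [intros y []|intros i j Hi; simpl in Hi; lia]].
      - destruct (classic (exists j, R k (f j) /\ forall y, In y l -> ~ veq (f j) y))
          as [[j [Hj Hn]]|Hn].
        + exists (f j :: l). split; [simpl; lia|split].
          * intros y [<-|Hy]; [exists j; auto|auto].
          * intros [|i] [|i'] Hi Hi' E; simpl in *; auto.
            -- exfalso; apply (Hn (nth i' l (vnat 0))); [apply nth_In; lia|auto].
            -- exfalso; apply (Hn (nth i l (vnat 0))); [apply nth_In; lia|apply veq_sym; auto].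
            -- f_equal; apply Hd; auto; lia.
        + exfalso; apply Hk; exists l; split; auto.
          intros j Hj. apply NNPP; intro Hc; apply Hn; exists j; split; auto.
          intros y Hy E; apply Hc; eauto. }
    destruct (choice_fun _ StepA) as [LL HLL].
    assert (j0 : exists j0 : J, True).
    { destruct (HLL 1) as [Hl [Hg _]]. destruct (LL 1) as [|y t] eqn:El; simpl in Hl; [lia|].
      destruct (Hg y) as [j _]; [left; auto|]. exists j; auto. }
    destruct j0 as [j0 _].
    assert (Hes : forall y, exists e, (exists j, y = f j /\ R k (f j)) ->
       Ik k e /\ forall g, pstab GA e g -> stab GA y g).
    { intro y. destruct (classic (exists j, y = f j /\ R k (f j))) as [[j [-> [e He]]]|Hn].
      - exists e; auto.
      - exists (fun _ => False); tauto. }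
    destruct (choice_fun _ Hes) as [esupp Hesupp].
    set (bs := fun N x => exists y, In y (LL N) /\ esupp y x).
    assert (Hbs : forall N, Ik (k + n0) (bs N)).
    { intro N. apply Hmono'. apply ideal_union_list; [apply (Hinv k)|].
      intros y Hy. apply (Hesupp y). apply (proj1 (proj2 (HLL N))); auto. }
    assert (Ha' : Ik (k + n0) a) by (rewrite Nat.add_comm; apply Hmono'; auto).
    destruct (Hstr (k + n0) a bs Ha' Hbs) as [gs [Hgs Hc]].
    set (c := fun x => exists m, img GA (gs m) (bs m) x) in Hc.
    assert (Ic : I c) by (apply HI; eauto).
    set (T' := fun j => forall h, pstab GA c h -> stab GA (f j) h).
    assert (StepD : forall N, exists js : nat -> J, (forall i, i < N -> T' (js i)) /\
       (forall i l, i < N -> l < N -> veq (f (js i)) (f (js l)) -> i = l)).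
    { intro N. destruct (HLL N) as [Hl [Hg Hd]].
      assert (Hy : forall i, exists j', i < N ->
          veq (actV GA (gs N) (nth i (LL N) (vnat 0))) (f j')).
      { intro i. destruct (classic (i < N)) as [Hi|Hi]; [|exists j0; intro; lia].
        destruct (Hg (nth i (LL N) (vnat 0))) as [j [Ej _]]; [apply nth_In; lia|].
        rewrite Ej. destruct (stab_mem _ _ _ _ (Ha _ (Hgs N)) j) as [j' E].
        exists j'; auto. }
      destruct (choice_fun _ Hy) as [js Hjs]. exists js. split.
      - intros i Hi h Hh. eapply stab_resp; [apply (Hjs i Hi)|].
        assert (Hin : In (nth i (LL N) (vnat 0)) (LL N)) by (apply nth_In; lia).
        apply supp_transport with (e := esupp (nth i (LL N) (vnat 0))).
        + apply (Hesupp _ (Hg _ Hin)).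
        + intros x [y' [Hy' <-]]. apply Hh. exists N, y'. split; [|reflexivity].
          exists (nth i (LL N) (vnat 0)); auto.
      - intros i l Hi Hl' E. apply Hd; try lia.
        apply (actV_inj GA (gs N)).
        eapply veq_trans; [apply (Hjs i Hi)|]. eapply veq_trans; [exact E|].
        apply veq_sym, (Hjs l Hl'). }
    assert (StepE : forall ks : list J, exists j, T' j /\ forall j', In j' ks -> ~ veq (f j) (f j')).
    { intro ks. apply NNPP; intro Hn.
      destruct (StepD (S (length ks))) as [js [HT Hd]].
      assert (Hs : forall i, exists idx, i < S (length ks) ->
         idx < length ks /\ veq (f (js i)) (f (nth idx ks j0))).
      { intro i. destruct (classic (i < S (length ks))) as [Hi|Hi]; [|exists 0; intro; lia].
        apply NNPP; intro Hcc. apply Hn. exists (js i); split; [apply HT; auto|].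
        intros j' Hj' E. destruct (In_nth ks j' j0 Hj') as [idx [Hidx Eidx]].
        apply Hcc; exists idx; intros _; split; auto; rewrite Eidx; auto. }
      destruct (choice_fun _ Hs) as [s Hs'].
      assert (S (length ks) <= length ks); [|lia].
      apply (pigeon (length ks) (S (length ks)) s).
      + intros i Hi; apply (Hs' i Hi).
      + intros i l Hi Hl E. apply Hd; auto.
        destruct (Hs' i Hi) as [_ E1]. destruct (Hs' l Hl) as [_ E2].
        rewrite E in E1. eapply veq_trans; [exact E1|apply veq_sym; exact E2]. }
    destruct (choice_fun _ StepE) as [nextf Hnext].
    set (Ls := fun n => nat_rect (fun _ => list J) nil (fun _ l => nextf l :: l) n).
    assert (HLs : forall n m, n < m -> In (nextf (Ls n)) (Ls m)).
    { intros n m; induction m; intro H; [lia|].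
      simpl. destruct (Nat.eq_dec n m) as [->|Hne]; [left; auto|right; apply IHm; lia]. }
    exists (fun n => f (nextf (Ls n))). split; [|split].
    + simpl. split.
      * exists c; split; auto. intros g Hg. apply stab_SetOf; intro n.
        apply stab_vopair; [apply stab_pure, pure_vnat|].
        apply (proj1 (Hnext (Ls n))); auto.
      * intro n. apply inW_vopair; [exact Hideal|apply inW_pure; auto; apply pure_vnat|apply HfW].
    + intros n m E. destruct (lt_eq_lt_dec n m) as [[H|H]|H]; auto; exfalso.
      * apply (proj2 (Hnext (Ls m)) _ (HLs _ _ H)). apply veq_sym; auto.
      * apply (proj2 (Hnext (Ls n)) _ (HLs _ _ H)). auto.
    + intro n. simpl. exists (nextf (Ls n)). apply veq_refl.
Qed.
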